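(* Let $n=2p+1$ agents choose between two options $A=\{a,b\}$, each agent having a strict preference over $A$, and let preferences over lotteries be given by stochastic dominance. Then the Bloc formation mechanism $\chi_{BF}$ Nash implements the majority rule: for every preference profile $R$, every Nash equilibrium $m$ of $\chi_{BF}$ at $R$ satisfies $\chi_{BF}(m)=Maj(R)$ (the degenerate lottery on $Maj(R)$), and there exists a Nash equilibrium $m$ at $R$ with $\chi_{BF}(m)=Maj(R)$.
   Context: Agents: $I=\{1,\dots,n\}$ with $n=2p+1$, $p\ge 1$. Options $A=\{a,b\}$. A preference profile $R=(R_1,\dots,R_n)$ assigns to each agent a strict preference over $A$. The majority rule is $Maj(R)=a$ if $|\{i: a\,R_i\,b\}|\ge p+1$ and $Maj(R)=b$ otherwise. $\Delta$ is the set of lotteries over $A$. Stochastic dominance (SD): agent $i$ whose preferred option is $x$ weakly prefers lottery $\beta$ to $\eta$ iff $\beta(x)\ge\eta(x)$, and strictly prefers iff $\beta(x)>\eta(x)$. A mechanism $g:\prod_i M_i\to\Delta$ Nash implements a social choice function $f$ if for every $R$ every Nash equilibrium (with respect to SD preferences) has outcome $f(R)$ and some Nash equilibrium has outcome $f(R)$. Bloc formation mechanism: each agent's message is $m_i=(v_i,c_i)$, where $v_i\in A$ is a vote and $c_i$ is a set of exactly $p$ agents not containing $i$ (her nominations). For $x\in A$, a set $B\subseteq I$ with $|B|\ge p+1$ is a bloc in favor of $x$ in $m$ if $v_i=x$ and $c_i\subseteq B$ for all $i\in B$. (All blocs in a profile favor the same option.) If $m$ admits a bloc in favor of $x$, then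 $\chi_{BF}(m)=x$. Otherwise $\chi_{BF}(m)=\eta(m)$, the lottery with $\eta^x(m)=\sum_{i\in I}\eta_i(m)\mathbf{1}\{v_i=x\}$, where $\eta_i(m)=|\{j\in I\setminus\{i\}: i\in c_j\}|/(np)$. *)

(* Defs.v *)
From HB Require Import structures.
From mathcomp Require Import all_boot all_order all_algebra.
Set Implicit Arguments. Unset Strict Implicit. Unset Printing Implicit Defensive.
Import Order.TTheory GRing.Theory Num.Theory.
Local Open Scope ring_scope.

Inductive option2 := opt_a | opt_b.
Definition option2_eqb (x y : option2) : bool :=
  match x, y with opt_a, opt_a | opt_b, opt_b => true | _, _ => false end.
Lemma option2_eqP : Equality.axiom option2_eqb.
Proof. by case; case; constructor. Qed.
HB.instance Definition _ := hasDecEq.Build option2 option2_eqP.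
Definition option2_to_bool (x : option2) : bool := if x is opt_a then true else false.
Definition bool_to_option2 (b : bool) : option2 := if b then opt_a else opt_b.
Lemma option2_boolK : cancel option2_to_bool bool_to_option2.
Proof. by case. Qed.
HB.instance Definition _ := Countable.copy option2 (can_type option2_boolK).
HB.instance Definition _ := Finite.copy option2 (can_type option2_boolK).

Section BF.
Variable p : nat.
Definition nagents : nat := p.*2.+1.
Definition agent := 'I_nagents.

(* A strict preference over A = {a,b} is identified with its top option. *)
Definition pref := option2.
Definition profile := agent -> pref.

Definition lottery := option2 -> rat.
Definition degenerate (x : option2) : lottery := fun y => (y == x)%:R.

Definition sd_weak (x : pref) (beta eta : lottery) : bool := eta x <= beta x.
Definition sd_strict (x : pref) (beta eta : lottery) : bool := eta x < beta x.

Definition Maj (R : profile) : option2 :=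
  if (p.+1 <= #|[set i | R i == opt_a]|)%N then opt_a else opt_b.

(* Messages: vote and set of nominations. *)
Definition message := (option2 * {set agent})%type.
Definition valid_message (i : agent) (mi : message) : bool :=
  (#|mi.2| == p) && (i \notin mi.2).
Definition mprofile := agent -> message.
Definition valid_mprofile (m : mprofile) : bool :=
  [forall i, valid_message i (m i)].

Definition is_bloc (m : mprofile) (x : option2) (B : {set agent}) : bool :=
  (p.+1 <= #|B|)%N && [forall i in B, ((m i).1 == x) && ((m i).2 \subset B)].
Definition has_bloc (m : mprofile) (x : option2) : bool :=
  [exists B : {set agent}, is_bloc m x B].

Definition eta_i (m : mprofile) (i : agent) : rat :=
  #|[set j | (j != i) && (i \in (m j).2)]|%:R / (nagents * p)%:R.
Definition eta_lot (m : mprofile) : lottery :=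
  fun x => \sum_(i : agent) eta_i m i * ((m i).1 == x)%:R.

Definition chi_BF (m : mprofile) : lottery :=
  if has_bloc m opt_a then degenerate opt_a
  else if has_bloc m opt_b then degenerate opt_b
  else eta_lot m.

Definition deviate (m : mprofile) (i : agent) (mi : message) : mprofile :=
  fun j => if j == i then mi else m j.

Definition nash_eq (R : profile) (m : mprofile) : Prop :=
  valid_mprofile m /\
  forall (i : agent) (mi : message), valid_message i mi ->
    ~~ sd_strict (R i) (chi_BF (deviate m i mi)) (chi_BF m).

Definition nash_implements (f : profile -> option2) : Prop :=
  forall R : profile,
    (forall m, nash_eq R m -> chi_BF m = degenerate (f R)) /\
    (exists m, nash_eq R m /\ chi_BF m = degenerate (f R)).
End BF.

(* Main.v *)
Require Import Defs.
From mathcomp Require Import all_boot all_order all_algebra.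
From mathcomp Require Import zify.
Set Implicit Arguments. Unset Strict Implicit. Unset Printing Implicit Defensive.
Import Order.TTheory GRing.Theory Num.Theory.

Ltac rlia := unfold reverse_coercion in *; lia.

Section Proof.
Variable p : nat.
Hypothesis hp : (1 <= p)%N.
Local Notation agent := (agent p).
Local Notation mprofile := (mprofile p).

Definition other (x : option2) := if x is opt_a then opt_b else opt_a.
Lemma other_neq x : (x == other x) = false. Proof. by case: x. Qed.
Lemma neq_other x y : x != y -> y = other x. Proof. by case: x; case: y. Qed.
Lemma other_neq' x : (other x == x) = false. Proof. by case: x. Qed.
Lemma otherK x : other (other x) = x. Proof. by case: x. Qed.

Lemma card_agent : #|agent| = p.*2.+1. Proof. by rewrite card_ord. Qed.

Definition w (m : mprofile) x (j k : agent) : nat :=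
  [&& j != k, k \in (m j).2 & (m k).1 == x].
Definition count (m : mprofile) x := (\sum_j \sum_k w m x j k)%N.

Lemma bool_leq (b1 b2 : bool) : (b1 -> b2) -> (b1 <= b2)%N.
Proof. by case: b1; case: b2 => // /(_ isT). Qed.

Lemma sum_lt (I : finType) (F G : I -> nat) i0 :
  (forall i, F i <= G i)%N -> (F i0 < G i0)%N -> (\sum_i F i < \sum_i G i)%N.
Proof.
move=> h1 h2; rewrite (bigD1 i0) // [X in (_ < X)%N](bigD1 i0) //=.
by rewrite -addSn leq_add // leq_sum.
Qed.

Lemma le_sum_term (I : finType) (F : I -> nat) i0 : (F i0 <= \sum_i F i)%N.
Proof. by rewrite (bigD1 i0) //= leq_addr. Qed.

Lemma count_lt (m : mprofile) m' x j0 k0 :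
  (forall j k, w m x j k <= w m' x j k)%N -> (w m x j0 k0 < w m' x j0 k0)%N ->
  (count m x < count m' x)%N.
Proof.
move=> h1 h2.
apply: (@sum_lt _ (fun j => \sum_k w m x j k) (fun j => \sum_k w m' x j k) j0).
  by move=> j; apply: leq_sum.
exact: (@sum_lt _ (fun k => w m x j0 k) (fun k => w m' x j0 k) k0).
Qed.

Lemma w_term (m : mprofile) x j k : (w m x j k <= count m x)%N.
Proof.
apply: (leq_trans _ (le_sum_term _ j)); exact: (le_sum_term (fun k => w m x j k) k).
Qed.

Lemma np_gt0 : (0 < nagents p * p)%N.
Proof. by rewrite muln_gt0 /nagents. Qed.

Lemma eta_lotE (m : mprofile) x :
  eta_lot m x = ((count m x)%:R / (nagents p * p)%:R)%R.
Proof.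
rewrite /eta_lot /eta_i.
under eq_bigr do rewrite GRing.mulrAC.
rewrite -GRing.mulr_suml; congr (_ * _)%R.
rewrite /count exchange_big /= natr_sum; apply: eq_bigr => k _.
rewrite -natrM; congr (_ %:R)%R.
rewrite -sum1_card big_distrl /= big_mkcond /=; apply: eq_bigr => j _.
rewrite /w inE; case: (_ != _); case: (_ \in _); case: (_ == _) => //.
Qed.

Lemma valid_get (m : mprofile) (i : agent) : valid_mprofile m -> #|(m i).2| = p /\ i \notin (m i).2.
Proof. by move/forallP/(_ i)/andP => [/eqP -> ->]. Qed.

Lemma count_sum_le (m : mprofile) x : valid_mprofile m ->
  (count m x + count m (other x) <= nagents p * p)%N.
Proof.
move=> hv; rewrite /count -big_split /=.
have -> : (nagents p * p = \sum_(j : agent) p)%N.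
  by rewrite sum_nat_const card_ord.
apply: leq_sum => j _; rewrite -big_split /=.
have [hc _] := valid_get j hv.
apply: (@leq_trans #|(m j).2|); last by rewrite hc.
rewrite -sum1_card [X in (_ <= X)%N]big_mkcond /=; apply: leq_sum => k _.
rewrite /w; case: (_ != _); case: (_ \in _) => //=.
by case: x; case: (m k).1.
Qed.

Lemma closed_card (m : mprofile) (C : {set agent}) i : valid_mprofile m -> i \in C ->
  (forall j, j \in C -> (m j).2 \subset C) -> (p < #|C|)%N.
Proof.
move=> hv hi hC; have [hc hni] := valid_get i hv.
have : (m i).2 \subset C :\ i.
  apply/subsetP => k hk; rewrite !inE (subsetP (hC i hi)) // andbT.
  by apply: contraNneq hni => e; move: hk; rewrite e.
move/subset_leq_card; rewrite hc (cardsD1 i C) hi /=; lia.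
Qed.

Lemma mk_bloc (m : mprofile) x (C : {set agent}) i : valid_mprofile m -> i \in C ->
  (forall j, j \in C -> ((m j).1 == x) && ((m j).2 \subset C)) -> is_bloc m x C.
Proof.
move=> hv hi hC; apply/andP; split.
  by apply: (closed_card hv hi) => j /hC /andP[].
by apply/forallP => j; apply/implyP => /hC.
Qed.

Lemma blocs_meet (m : mprofile) x y B1 B2 : is_bloc m x B1 -> is_bloc m y B2 ->
  exists i, i \in B1 :&: B2.
Proof.
move=> /andP[h1 _] /andP[h2 _]; apply/set0Pn; rewrite -card_gt0.
have := cardsUI B1 B2; have := max_card (B1 :|: B2); rewrite card_agent.
lia.
Qed.

Lemma bloc_vote (m : mprofile) x B i : is_bloc m x B -> i \in B -> ((m i).1 == x) && ((m i).2 \subset B).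
Proof. by move=> /andP[_ /forallP /(_ i) /implyP h] /h. Qed.

Lemma bloc_same (m : mprofile) x y B1 B2 : is_bloc m x B1 -> is_bloc m y B2 -> x = y.
Proof.
move=> h1 h2; have [i] := blocs_meet h1 h2; rewrite inE => /andP[i1 i2].
have /andP[/eqP e1 _] := bloc_vote h1 i1.
have /andP[/eqP e2 _] := bloc_vote h2 i2.
by rewrite -e1 -e2.
Qed.

Lemma meet_bloc (m : mprofile) x B1 B2 : valid_mprofile m -> is_bloc m x B1 -> is_bloc m x B2 ->
  is_bloc m x (B1 :&: B2).
Proof.
move=> hv h1 h2; have [i hi] := blocs_meet h1 h2.
apply: (mk_bloc hv hi) => j; rewrite inE => /andP[j1 j2].
have /andP[-> s1] := bloc_vote h1 j1; have /andP[_ s2] := bloc_vote h2 j2.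
by rewrite subsetI s1 s2.
Qed.

Lemma no_both (m : mprofile) x : has_bloc m x -> has_bloc m (other x) -> False.
Proof.
move=> /existsP[B1 h1] /existsP[B2 h2]; have := bloc_same h1 h2.
by clear h1 h2; case: x.
Qed.

Lemma chi_val (m : mprofile) y : ~~ has_bloc m (other y) ->
  chi_BF m y = if has_bloc m y then 1%R else eta_lot m y.
Proof.
rewrite /chi_BF; case: y => /= /negbTE ->; case: has_bloc => //.
Qed.

Lemma chi_deg (m : mprofile) x : has_bloc m x -> chi_BF m = degenerate x.
Proof.
rewrite /chi_BF; case: x => [->//|hb].
case ha: (has_bloc m opt_a); first by exfalso; exact: (no_both ha hb).
by rewrite hb.
Qed.

Lemma valid_dev (m : mprofile) (i : agent) (mi : message p) : valid_mprofile m -> valid_message i mi ->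
  valid_mprofile (deviate m i mi).
Proof.
move=> /forallP hv hmi; apply/forallP => j; rewrite /deviate.
by case: eqVneq => [->|_].
Qed.

Lemma dev_other (m : mprofile) (i : agent) (mi : message p) (j : agent) : j != i -> deviate m i mi j = m j.
Proof. by rewrite /deviate => /negbTE ->. Qed.

Lemma dev_self (m : mprofile) (i : agent) (mi : message p) : deviate m i mi i = mi.
Proof. by rewrite /deviate eqxx. Qed.

Lemma dev_bloc (m : mprofile) (i : agent) (mi : message p) y (B : {set agent}) : i \notin B ->
  is_bloc (deviate m i mi) y B = is_bloc m y B.
Proof.
move=> hi; rewrite /is_bloc; congr (_ && _); apply: eq_forallb => j.
case: (boolP (j \in B)) => //= hj.
by rewrite dev_other //; apply: contraNneq hi => <-.
Qed.

Lemma dev_no_bloc (m : mprofile) (i : agent) (mi : message p) y : ~~ has_bloc m y -> mi.1 != y ->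
  ~~ has_bloc (deviate m i mi) y.
Proof.
move=> hn hy; apply: contra hn => /existsP[B hB]; apply/existsP; exists B.
have hi : i \notin B.
  apply/negP => hiB; have /andP[e _] := bloc_vote hB hiB.
  by rewrite dev_self (negbTE hy) in e.
by rewrite -(dev_bloc m mi y hi).
Qed.


Lemma ne_dev (R : profile p) (m : mprofile) (i : agent) (mi : message p) :
  nash_eq R m -> valid_message i mi ->
  ~~ (chi_BF m (R i) < chi_BF (deviate m i mi) (R i))%R.
Proof. by case=> _ h /h. Qed.

Lemma improve (R : profile p) (m : mprofile) (i : agent) c :
  nash_eq R m -> ~~ has_bloc m opt_a -> ~~ has_bloc m opt_b ->
  valid_message i (R i, c) -> (0 < count m (other (R i)))%N ->
  (count m (R i) < count (deviate m i (R i, c)) (R i))%N -> False.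
Proof.
move=> hne ha hb hv hpos hlt.
have hvm := hne.1.
have nob : forall z, ~~ has_bloc m z by case.
have h := ne_dev hne hv.
have e1 : chi_BF m (R i) = eta_lot m (R i) by rewrite /chi_BF (negbTE ha) (negbTE hb).
have hn : (R i, c).1 != other (R i) by rewrite /= other_neq.
have e2 := chi_val (@dev_no_bloc m i (R i, c) (other (R i)) (nob (other (R i))) hn).

rewrite e1 e2 in h; move: h; case: has_bloc => /negP; apply.
  rewrite eta_lotE ltr_pdivrMr ?ltr0n ?np_gt0 // mul1r ltr_nat.
  have := count_sum_le (R i) hvm; lia.
rewrite !eta_lotE ltr_pM2r ?invr_gt0 ?ltr0n ?np_gt0 // ltr_nat //.
Qed.

Lemma w_dev_le (m : mprofile) (i : agent) x (c : {set agent}) (j k : agent) :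
  (forall k, k != i -> k \in (m i).2 -> (m k).1 == x -> k \in c) ->
  (w m x j k <= w (deviate m i (x, c)) x j k)%N.
Proof.
move=> hc; apply: bool_leq => /and3P[hjk hkc hv]; apply/and3P; split => //.
  case: (eqVneq j i) => [ej|nj]; last by rewrite dev_other.
  rewrite ej dev_self /=; rewrite ej in hjk hkc; apply: hc => //.
  by rewrite eq_sym.
case: (eqVneq k i) => [->|nk]; first by rewrite dev_self.
by rewrite dev_other.
Qed.

Lemma sincere (R : profile p) (m : mprofile) (i l : agent) :
  nash_eq R m -> ~~ has_bloc m opt_a -> ~~ has_bloc m opt_b ->
  l != i -> i \in (m l).2 -> (m i).1 = R i.
Proof.
move=> hne ha hb hli hil; apply/eqP/negPn/negP => hne'.
have hvm := hne.1; have [hc hni] := valid_get i hvm.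
have ho : (m i).1 = other (R i) by apply: neq_other; rewrite eq_sym.
apply: (improve (c := (m i).2) hne ha hb).
- by rewrite /valid_message /= hc eqxx; exact: hni.
- apply: (leq_trans _ (w_term m _ l i)).
  by rewrite /w hli hil /= ho eqxx.
- apply: (count_lt (j0 := l) (k0 := i)).
    by move=> j k; apply: w_dev_le.
  rewrite /w hli /= dev_other // hil dev_self /= eqxx.
  by rewrite ho other_neq'.
Qed.

Lemma swap_dev (R : profile p) (m : mprofile) (i j k : agent) :
  nash_eq R m -> ~~ has_bloc m opt_a -> ~~ has_bloc m opt_b ->
  k \in (m i).2 -> (m k).1 != R i -> j != i -> (m j).1 = R i -> j \notin (m i).2 ->
  False.
Proof.
move=> hne ha hb hk hkx hji hj hjn.
have hvm := hne.1; have [hc hni] := valid_get i hvm.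
have hik : i != k by apply: contraNneq hni => e; move: hk; rewrite -e.
have ho : (m k).1 = other (R i) by apply: neq_other; rewrite eq_sym.
apply: (@improve R m i (j |: ((m i).2 :\ k)) hne ha hb).
- rewrite /valid_message /= cardsU1 !inE negb_or negb_and hjn orbT /=.
  move: hc; rewrite (cardsD1 k) hk => /= hc.
  rewrite hc eqxx eq_sym hji /= (negbTE hni) andbF //=.
- apply: (leq_trans _ (w_term m _ i k)).
  by rewrite /w hik hk /= ho eqxx.
- apply: (count_lt (j0 := i) (k0 := j)).
    move=> j' k'; apply: w_dev_le => k'' _ hk'' /eqP hv.
    rewrite !inE hk'' andbT; apply/orP; right.
    by apply: contra_neq hkx => <-; rewrite hv.
  rewrite /w eq_sym hji (negbTE hjn) /= dev_self dev_other //= !inE eqxx /= hj eqxx.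
  by [].
Qed.

Lemma keyK (R : profile p) (m : mprofile) z (j0 k0 : agent) :
  nash_eq R m -> ~~ has_bloc m opt_a -> ~~ has_bloc m opt_b ->
  j0 != k0 -> k0 \in (m j0).2 -> (m k0).1 = z ->
  (#|[set k | (m k).1 == z]| <= p)%N /\
  exists j1 k1 : agent, [/\ j1 != k1, k1 \in (m j1).2 & (m k1).1 = other z].
Proof.
move=> hne ha hb hjk hkc hkz; have hvm := hne.1.
have nob : forall z, ~~ has_bloc m z by case.
pose Ap := [set k | ((m k).1 == z) && [exists j, (j != k) && (k \in (m j).2)]].
have k0A : k0 \in Ap.
  by rewrite inE hkz eqxx /=; apply/existsP; exists j0; rewrite hjk.
case: (boolP [forall i in Ap, (m i).2 \subset Ap]) => hall.
  exfalso; move: (nob z) => /negP; apply; apply/existsP; exists Ap.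
  apply: (mk_bloc hvm k0A) => j hj.
  move/forallP/(_ j)/implyP: hall => /(_ hj) ->.
  by move: hj; rewrite inE => /andP[-> _].
move/forallPn: hall => [i]; rewrite negb_imply => /andP[hiA /subsetPn [k hk hkA]].
have [hc hni] := valid_get i hvm.
have hik : i != k by apply: contraNneq hni => e; move: hk; rewrite -e.
move: hiA; rewrite inE => /andP[/eqP hiz /existsP [l /andP[hli hil]]].
have hkz' : (m k).1 != z.
  apply: contra hkA => hkz'; rewrite inE hkz' /=.
  by apply/existsP; exists i; rewrite hik hk.
have hRi : R i = z by rewrite -hiz; symmetry; apply: (sincere hne ha hb hli hil).
split; last first.
  exists i, k; split => //; apply: neq_other; rewrite eq_sym; exact: hkz'.
have hsub : [set k | (m k).1 == z] :\ i \subset (m i).2 :\ k.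
  apply/subsetP => j; rewrite !inE => /andP[hji /eqP hjz].
  have hjc : j \in (m i).2.
    apply/negPn/negP => hjn.
    apply: (swap_dev hne ha hb hk _ hji _ hjn); by rewrite hRi.
  rewrite hjc andbT; apply/eqP => ejk; move: hkz'; by rewrite -ejk hjz eqxx.
move/subset_leq_card: hsub.
have e1 := cardsD1 i [set k | (m k).1 == z]; have e2 := cardsD1 k (m i).2.
rewrite inE hiz eqxx in e1; rewrite hk in e2; simpl in e1, e2; move=> hh; rewrite e1; apply: (@leq_trans (1 + #|(m i).2 :\ k|)); [by rewrite leq_add2l | by rewrite -e2 hc].
Qed.

Lemma no_bloc_NE (R : profile p) (m : mprofile) :
  nash_eq R m -> ~~ has_bloc m opt_a -> ~~ has_bloc m opt_b -> False.
Proof.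
move=> hne ha hb; have hvm := hne.1.
pose i0 : agent := @Ordinal _ 0 (ltn0Sn _).
have [hc hni] := valid_get i0 hvm.
have : (0 < #|(m i0).2|)%N by rewrite hc.
rewrite card_gt0 => /set0Pn [k hk].
have hik : i0 != k by apply: contraNneq hni => e; move: hk; rewrite -e.
have [h1 [j1 [k1 [h2 h3 h4]]]] := keyK hne ha hb hik hk (erefl _).
have [h5 _] := keyK hne ha hb h2 h3 h4.
have := cardsC [set k' | (m k').1 == (m k).1].
have -> : ~: [set k' | (m k').1 == (m k).1] = [set k' | (m k').1 == other (m k).1].
  by apply/setP => k'; rewrite !inE; case: (m k').1; case: (m k).1.
rewrite card_agent; lia.
Qed.

Lemma maj_supp (R : profile p) : (p < #|[set i | R i == Maj R]|)%N.
Proof.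
rewrite /Maj; case: ifP => [h|h]; first done.
have := cardsC [set i | R i == opt_a].
have -> : ~: [set i | R i == opt_a] = [set i | R i == opt_b].
  by apply/setP => i; rewrite !inE; case: (R i).
rewrite card_agent; move/negbT: h; lia.
Qed.

Lemma bloc_NE (R : profile p) (m : mprofile) x :
  nash_eq R m -> has_bloc m x -> x = Maj R.
Proof.
move=> hne /existsP [B0 hB0]; have hvm := hne.1.
apply/eqP/negPn/negP => hxy.
have hy : Maj R = other x by apply: neq_other.
have [M [hM hmin]] : exists M : {set agent},
    is_bloc m x M /\ forall B : {set agent}, is_bloc m x B -> (#|M| <= #|B|)%N.
  by case: (arg_minnP (fun B : {set agent} => #|B|) hB0) => M hM hmin; exists M.
have hMsub : forall B, is_bloc m x B -> M \subset B.
  move=> B hB; have hBM := meet_bloc hvm hB hM.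
  have hle := hmin _ hBM.
  have hsub : B :&: M \subset M := subsetIr _ _.
  have heq : #|B :&: M| = #|M|.
    by apply/eqP; rewrite eqn_leq hle subset_leq_card.
  move/(subset_cardP heq): hsub => e.
  apply/subsetP => j hj; move: (e j); rewrite hj inE => /andP[] //.
have [j hj] : exists j, j \in M :&: [set i | R i == Maj R].
  apply/set0Pn; rewrite -card_gt0.
  have := cardsUI M [set i | R i == Maj R].
  have := max_card (M :|: [set i | R i == Maj R]).
  have := maj_supp R; move/andP: hM => [hMc _]; rewrite card_agent; move=> h1 h2 h3.
move: h2; rewrite -(leq_add2r #|M :&: [set i | R i == Maj R]|) h3. move=> h4; move: hMc h1 h4; clear; rewrite /reverse_coercion; rlia.
move: hj; rewrite inE => /andP [hjM]; rewrite inE => /eqP hRj.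
have [l hl] : exists l, [&& l \in M, l != j & j \in (m l).2].
  case: (boolP [exists l, [&& l \in M, l != j & j \in (m l).2]]) => [/existsP //|].
  rewrite negb_exists => /forallP hn; exfalso.
  have hcard : (0 < #|M :\ j|)%N.
    move/andP: hM => [hMc _]; have e := cardsD1 j M; rewrite hjM in e; rewrite e add1n ltnS in hMc; exact: leq_trans hp hMc.
  move: hcard; rewrite card_gt0 => /set0Pn [l0 hl0].
  have hb : is_bloc m x (M :\ j).
    apply: (mk_bloc hvm hl0) => l; rewrite !inE => /andP [hlj hlM].
    have /andP [-> hsM] := bloc_vote hM hlM; rewrite /=.
    apply/subsetP => k hk; rewrite !inE (subsetP hsM) // andbT.
    by apply/eqP => ekj; move: (hn l); rewrite hlM hlj -ekj hk.
  have := hmin _ hb; have := cardsD1 j M; rewrite hjM /=; rlia.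
move/and3P: hl => [hlM hlj hjl].
have [hc hni] := valid_get j hvm.
have hv : valid_message j (Maj R, (m j).2).
  by rewrite /valid_message /= hc eqxx; exact: hni.
have h := ne_dev hne hv; rewrite hRj in h.
set m' := deviate m j (Maj R, (m j).2) in h.
have nox : ~~ has_bloc m' x.
  apply/negP => /existsP [B hB].
  have hjB : j \notin B.
    apply/negP => hjB; have /andP [e _] := bloc_vote hB hjB.
    by rewrite /m' dev_self /= hy other_neq' in e.
  rewrite /m' (dev_bloc m (Maj R, (m j).2) x hjB) in hB.
  by move: hjB; rewrite (subsetP (hMsub _ hB)).
have e1 : chi_BF m (Maj R) = 0%R.
  have hbx : has_bloc m x by apply/existsP; exists B0.
  by rewrite (chi_deg hbx) /degenerate hy other_neq'.
have nox' : ~~ has_bloc m' (other (Maj R)) by rewrite hy otherK.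
have e2 := chi_val nox'.
rewrite e1 e2 in h; move: h; case: has_bloc => /negP; apply; first by rewrite ltr01.
rewrite eta_lotE divr_gt0 ?ltr0n ?np_gt0 //.
apply: (leq_trans _ (w_term m' _ l j)).
by rewrite /w hlj /m' dev_other // hjl dev_self /= eqxx.
Qed.

Lemma NE_outcome (R : profile p) (m : mprofile) :
  nash_eq R m -> chi_BF m = degenerate (Maj R).
Proof.
move=> hne; case ha: (has_bloc m opt_a).
  by rewrite (chi_deg ha) (bloc_NE hne ha).
case hb: (has_bloc m opt_b).
  by rewrite (chi_deg hb) (bloc_NE hne hb).
by exfalso; apply: (no_bloc_NE hne); rewrite ?ha ?hb.
Qed.

Lemma exists_subset (T : finType) (A : {set T}) k :
  (k <= #|A|)%N -> exists B : {set T}, B \subset A /\ #|B| = k.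
Proof.
elim: k => [|k IH] hk; first by exists set0; rewrite sub0set cards0.
have [B [hBA hBk]] := IH (ltnW hk).
have : B \proper A by rewrite properEcard hBA hBk.
case/properP => _ [a haA haB].
exists (a |: B); split; first by rewrite subUset sub1set haA hBA.
by rewrite cardsU1 haB hBk.
Qed.

Lemma chi_le1 (m : mprofile) z : valid_mprofile m -> (chi_BF m z <= 1)%R.
Proof.
move=> hv; rewrite /chi_BF.
have hd : forall x, (degenerate x z <= 1)%R.
  by move=> x; rewrite /degenerate; case: (_ == _); rewrite /= ?lexx ?ler01.
case: ifP => _; first exact: hd.
case: ifP => _; first exact: hd.
rewrite eta_lotE ler_pdivrMr ?ltr0n ?np_gt0 // mul1r ler_nat.
have := count_sum_le z hv; rlia.
Qed.

Lemma NE_exists (R : profile p) :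
  exists m, nash_eq R m /\ chi_BF m = degenerate (Maj R).
Proof.
set x := Maj R; pose S := [set i | R i == x].
have hS : (p < #|S|)%N := maj_supp R.
have hc : forall i : agent, exists c : {set agent}, c \subset S :\ i /\ #|c| = p.
  move=> i; apply: exists_subset.
  move: hS; rewrite (cardsD1 i S); case: (i \in S) => /= h; first by rewrite add1n ltnS in h.
  by rewrite add0n in h; apply: ltnW.
have [c hcP] := fin_all_exists hc.
pose m0 : mprofile := fun i => (x, c i).
have hv : valid_mprofile m0.
  apply/forallP => i; rewrite /valid_message /=.
  have [hs hcard] := hcP i; rewrite hcard eqxx /=.
  by apply/negP => hi; have := subsetP hs _ hi; rewrite !inE eqxx.
have hSb : forall m : mprofile, (forall i, i \in S -> m i = m0 i) -> is_bloc m x S.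
  move=> m hm; apply/andP; split => //; apply/forallP => i; apply/implyP => hi.
  rewrite hm //= eqxx /=; have [hs _] := hcP i.
  by apply: (subset_trans hs); apply: subD1set.
have hch : chi_BF m0 = degenerate x.
  by apply: chi_deg; apply/existsP; exists S; apply: hSb.
exists m0; split => //; split => // i mi hmi.
rewrite /sd_strict hch.
case: (eqVneq (R i) x) => hRi.
  by rewrite hRi /degenerate eqxx -leNgt chi_le1 // valid_dev.
have hiS : i \notin S by rewrite inE.
have hb : has_bloc (deviate m0 i mi) x.
  apply/existsP; exists S; rewrite dev_bloc //; exact: hSb.
by rewrite (chi_deg hb) ltxx.
Qed.

End Proof.

Theorem proposition1 (p : nat) (hp : (1 <= p)%N) : @nash_implements p (@Maj p).
Proof.
move=> R; split; first by move=> m hm; apply: NE_outcome.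
exact: NE_exists.
Qed.
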